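(* Suppose the PL condition, KKT regularity, and projected-gradient injectivity (below) hold for all $t=1,\dots,T$, observations are noiseless, and the latent parameters are stationary: $\boldsymbol{\theta}_t\equiv\boldsymbol{\theta}$ for all $t$. Then for $\boldsymbol{\theta}'\in\Theta$, $$\sum_{t=1}^T\ell_t(\boldsymbol{\theta}')=0\;\Longrightarrow\;\boldsymbol{\theta}'=\boldsymbol{\theta}.$$
   Context: Setting: for periods $t=1,\dots,T$, data $\mathbf{B}_t\in\mathbb{R}^{k\times n}$, $\mathbf{q}_t\in\mathbb{R}^k_{+}$ define $\mathcal{X}_t=\{\mathbf{x}\in\mathbb{R}^n_+:\mathbf{B}_t\mathbf{x}\le\mathbf{q}_t\}$. $\Theta\subset\mathbb{R}^p$ is a parameter set, $c_t:\mathbb{R}^n\times\Theta\to\mathbb{R}$ is differentiable in $\mathbf{x}$, and allocations $\mathbf{x}_t\in\mathbb{R}^n_+$ are observed. $\mathrm{P}_t:=I-\mathbf{B}_t^\top(\mathbf{B}_t\mathbf{B}_t^\top)^\dagger\mathbf{B}_t$. The inverse loss is $$\ell_t(\boldsymbol{\theta}) := \|(\mathbf{B}_t\mathbf{x}_t-\mathbf{q}_t)_+\|^2+\inf_{\boldsymbol{\lambda}_t\ge 0}\|\nabla_{\mathbf{x}}c_t(\mathbf{x}_t;\boldsymbol{\theta})+\mathbf{B}_t^\top\boldsymbol{\lambda}_t\|^2+|\boldsymbol{\lambda}_t^\top(\mathbf{B}_t\mathbf{x}_t-\mathbf{q}_t)|,$$ with $\boldsymbol{\lambda}_t\ge0$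 the multiplier appearing in the dual feasibility term. PL condition: there is $\mu>0$ with $\frac{1}{2\mu}\|\nabla_{\mathbf{x}}c_t(\mathbf{x};\boldsymbol{\theta})\|^2\ge c_t(\mathbf{x};\boldsymbol{\theta})-\min_{\mathbf{y}\in\mathcal{X}_t}c_t(\mathbf{y};\boldsymbol{\theta})$ for all $t$, $\boldsymbol{\theta}\in\Theta$, $\mathbf{x}\in\mathbb{R}^n_+$. KKT regularity: for each $t$ there exist a latent parameter $\boldsymbol{\theta}_t\in\Theta$ and $\boldsymbol{\lambda}_t\in\mathbb{R}^k_+$ with $\nabla_{\mathbf{x}}c_t(\mathbf{x}_t;\boldsymbol{\theta}_t)+\mathbf{B}_t^\top\boldsymbol{\lambda}_t=\mathbf{0}$, $\mathbf{B}_t\mathbf{x}_t\le\mathbf{q}_t$, $\boldsymbol{\lambda}_t^\top(\mathbf{B}_t\mathbf{x}_t-\mathbf{q}_t)=0$. Projected-gradient injectivity: for each $t$, $\boldsymbol{\theta}\mapsto\mathrm{P}_t\nabla_{\mathbf{x}}c_t(\mathbf{x}_t;\boldsymbol{\theta})$ is injective on $\Theta$. *)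

(* Defs.v *)
From HB Require Import structures.
From mathcomp Require Import all_boot all_order all_algebra.
From mathcomp Require Import all_classical all_reals all_analysis.
Set Implicit Arguments. Unset Strict Implicit. Unset Printing Implicit Defensive.
Import Order.TTheory GRing.Theory Num.Theory.
Import numFieldNormedType.Exports.
Local Open Scope classical_set_scope.
Local Open Scope ring_scope.

Section Defs.
Variable R : realType.

Definition sqnorm (m : nat) (v : 'cV[R]_m) : R := \sum_(i < m) (v i 0) ^+ 2.

Definition dotv (m : nat) (u v : 'cV[R]_m) : R := \sum_(i < m) u i 0 * v i 0.

Definition pospart (m : nat) (v : 'cV[R]_m) : 'cV[R]_m := map_mx (fun a => Num.max a 0) v.

Definition lev (m : nat) (u v : 'cV[R]_m) : Prop := forall i, u i 0 <= v i 0.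
Definition nonneg (m : nat) (v : 'cV[R]_m) : Prop := lev 0 v.

Definition is_mpinv (a b : nat) (A : 'M[R]_(a, b)) (X : 'M[R]_(b, a)) : Prop :=
  [/\ A *m X *m A = A, X *m A *m X = X, (A *m X)^T = A *m X & (X *m A)^T = X *m A].
Definition mpinv (a b : nat) (A : 'M[R]_(a, b)) : 'M[R]_(b, a) :=
  xget 0 [set X | is_mpinv A X].

Definition projB (k n : nat) (B : 'M[R]_(k, n)) : 'M[R]_n :=
  1%:M - B^T *m mpinv (B *m B^T) *m B.

Definition gradx (n : nat) (f : 'cV[R]_n -> R) (x : 'cV[R]_n) : 'cV[R]_n :=
  \col_i ('D_(delta_mx i 0 : 'cV[R]_n) f x).

Definition feas (k n : nat) (B : 'M[R]_(k, n)) (q : 'cV[R]_k) : set 'cV[R]_n :=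
  [set x | nonneg x /\ lev (B *m x) q].

Definition inv_loss (k n p : nat) (B : 'M[R]_(k, n)) (q : 'cV[R]_k)
  (c : 'cV[R]_n -> 'cV[R]_p -> R) (x : 'cV[R]_n) (th : 'cV[R]_p) : R :=
  sqnorm (pospart (B *m x - q)) +
  inf [set r | exists lam : 'cV[R]_k, nonneg lam /\
        r = sqnorm (gradx (fun y => c y th) x + B^T *m lam)
            + `| dotv lam (B *m x - q) |].

End Defs.

(* Main.v *)
Require Import Defs.
From HB Require Import structures.
From mathcomp Require Import all_boot all_order all_algebra.
From mathcomp Require Import all_classical all_reals all_analysis.
Import Order.TTheory GRing.Theory Num.Theory.
Import numFieldNormedType.Exports.
Local Open Scope classical_set_scope.
Local Open Scope ring_scope.

Lemma trN0 (R : realType) a b (N : 'M[R]_(a, b)) : N^T *m N = 0 -> N = 0.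
Proof.
move=> H; apply/matrixP => i j; rewrite mxE.
have := congr1 (fun A : 'M[R]_b => A j j) H; rewrite !mxE.
move=> /psumr_eq0P H1.
have H2 : forall l : 'I_a, true -> 0 <= N^T j l * N l j.
  by move=> l _; rewrite mxE -expr2 sqr_ge0.
by have := H1 H2 i isT; rewrite mxE => /eqP; rewrite mulf_eq0 orbb => /eqP.
Qed.

Lemma canc (R : realType) a b c (N : 'M[R]_(a, b)) (Y : 'M[R]_(b, c)) :
  N^T *m (N *m Y) = 0 -> N *m Y = 0.
Proof.
move=> H; apply: trN0; by rewrite trmx_mul -mulmxA H mulmx0.
Qed.

Lemma mp_exists (R : realType) k (M : 'M[R]_k) : M^T = M -> exists X, is_mpinv M X.
Proof.
move=> sM.
have cM : forall c (Y : 'M[R]_(k, c)), M *m (M *m Y) = 0 -> M *m Y = 0.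
  by move=> c Y H; apply: canc; rewrite sM.
have [G HG] : exists G, M *m M *m M *m G *m (M *m M *m M) = M *m M *m M.
  by exists (pinvmx (M *m M *m M)); apply: mulmxKpV; exact: submx_refl.
have [Gs [sGs HGs]] : exists Gs : 'M[R]_k, Gs^T = Gs /\
    M *m M *m M *m Gs *m M *m M *m M = M *m M *m M.
  exists (G *m (M *m M *m M) *m G^T); split.
    by rewrite !trmx_mul !trmxK sM !mulmxA.
  have HGt : M *m M *m M *m G^T *m (M *m M *m M) = M *m M *m M.
    by have := congr1 trmx HG; rewrite !trmx_mul sM !mulmxA.
  by rewrite !mulmxA in HG HGt *; rewrite HG HGt.
have F1 : M *m Gs *m M *m M *m M = M.
  have : M *m (Gs *m (M *m M *m M) - 1%:M) = 0.
    apply: (cM); apply: (cM).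
    by rewrite !mulmxBr mulmx1 !mulmxA HGs subrr.
  by rewrite mulmxBr mulmx1 => /eqP; rewrite subr_eq0 !mulmxA => /eqP.
have F2 : M *m M *m M *m Gs *m M = M.
  by have := congr1 trmx F1; rewrite !trmx_mul sM sGs !mulmxA.
have F3 : M *m M *m Gs *m M *m M = M.
  pose Z := M *m Gs *m M *m M - 1%:M.
  have ZM : Z *m M = 0 by rewrite /Z mulmxBl mul1mx F1 subrr.
  have sE : (M *m Z)^T = M *m Z.
    by rewrite /Z mulmxBr mulmx1 linearB /= !trmx_mul sM sGs !mulmxA.
  have : M *m Z = 0.
    by apply: trN0; rewrite sE -mulmxA (mulmxA Z) ZM mul0mx mulmx0.
  by rewrite /Z mulmxBr mulmx1 !mulmxA => /eqP; rewrite subr_eq0 => /eqP.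
have HD : M *m M *m Gs *m M = M *m Gs *m M *m M.
  move Dd : (M *m M *m Gs *m M - M *m Gs *m M *m M) => D.
  have DM : D *m M = 0 by rewrite -Dd mulmxBl F3 F1 subrr.
  have DT : D^T = - D.
    by rewrite -Dd linearB /= !trmx_mul sM sGs !mulmxA opprB.
  have : D = 0.
    apply: trN0; rewrite DT mulNmx {2}(esym Dd) mulmxBr !mulmxA DM !mul0mx subrr oppr0 //.
  by rewrite -Dd => /eqP; rewrite subr_eq0 => /eqP.
exists (M *m Gs *m M); split.
- by rewrite !mulmxA F3.
- have F2' := F2; rewrite -!mulmxA in F2'.
  by rewrite -!mulmxA F2'.
- by rewrite !trmx_mul sM sGs !mulmxA HD.
- by rewrite !trmx_mul sM sGs !mulmxA HD.
Qed.

Lemma sqnormE (R : realType) m (v : 'cV[R]_m) : sqnorm v = (v^T *m v) 0 0.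
Proof. by rewrite /sqnorm mxE; apply: eq_bigr => i _; rewrite mxE expr2. Qed.

Lemma sqnorm_ge0 (R : realType) m (v : 'cV[R]_m) : 0 <= sqnorm v.
Proof. by rewrite /sqnorm; apply: sumr_ge0 => i _; rewrite sqr_ge0. Qed.

Lemma sqnorm_eq0 (R : realType) m (v : 'cV[R]_m) : sqnorm v = 0 -> v = 0.
Proof.
move=> H; apply: trN0; apply/matrixP => i j.
rewrite (ord1 i) (ord1 j) -sqnormE H !mxE //.
Qed.

Lemma projB_facts (R : realType) k n (B : 'M[R]_(k, n)) :
  projB B *m B^T = 0 /\ forall u, sqnorm (projB B *m u) <= sqnorm u.
Proof.
have sM : (B *m B^T)^T = B *m B^T by rewrite trmx_mul trmxK.
have [P1 P2 P3 P4] : is_mpinv (B *m B^T) (mpinv (B *m B^T)).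
  by rewrite /mpinv; apply: xgetPex; exact: mp_exists.
rewrite /projB; move: (mpinv _) P1 P2 P3 P4 => X P1 P2 P3 P4.
rewrite !mulmxA in P1 P2.
have Ha : B *m B^T *m X *m B = B.
  move Dd : (B *m B^T *m X *m B - B) => D.
  have DB : D *m B^T = 0.
    by rewrite -Dd mulmxBl P1 subrr.
  have : D^T = 0.
    apply: trN0; rewrite trmxK -Dd linearB /= !trmx_mul !trmxK Dd mulmxBr !mulmxA DB !mul0mx subrr //.
  by rewrite -Dd => /eqP; rewrite linearB /= subr_eq0 => /eqP /(congr1 trmx); rewrite !trmxK.
have HaT : B^T *m X^T *m B *m B^T = B^T.
  by have := congr1 trmx Ha; rewrite !trmx_mul !trmxK !mulmxA.
have Hb : B^T *m X *m B = B^T *m X^T *m B.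
  have -> : B^T *m X^T *m B = B^T *m X^T *m (B *m B^T *m X *m B) by rewrite Ha.
  by rewrite !mulmxA HaT.
have P2r : forall c (Y : 'M[R]_(k, c)), X *m (B *m (B^T *m (X *m Y))) = X *m Y.
  by move=> c Y; rewrite !mulmxA P2.
set Q := B^T *m X *m B.
have HQs : Q^T = Q by rewrite /Q !trmx_mul trmxK mulmxA -Hb.
have HQQ : Q *m Q = Q by rewrite /Q -!mulmxA P2r.
split.
  by rewrite mulmxBl mul1mx /Q Hb HaT subrr.
move=> u.
have HPP : (1%:M - Q)^T *m (1%:M - Q) = 1%:M - Q.
  have -> : (1%:M - Q)^T = 1%:M - Q by rewrite linearB /= trmx1 HQs.
  by rewrite mulmxBl mul1mx mulmxBr mulmx1 HQQ subrr subr0.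
have E1 : ((1%:M - Q) *m u)^T *m ((1%:M - Q) *m u) = u^T *m (1%:M - Q) *m u.
  by rewrite trmx_mul -[in RHS]HPP !mulmxA.
have E2 : (Q *m u)^T *m (Q *m u) = u^T *m Q *m u.
  by rewrite trmx_mul HQs -[in RHS]HQQ !mulmxA.
have Esum : u^T *m u = ((1%:M - Q) *m u)^T *m ((1%:M - Q) *m u) + (Q *m u)^T *m (Q *m u).
  by rewrite E1 E2 mulmxBr mulmx1 mulmxBl subrK.
rewrite !sqnormE Esum [X in _ <= X]mxE -!sqnormE lerDl; exact: sqnorm_ge0.
Qed.

Lemma loss_facts (R : realType) k n p (B : 'M[R]_(k, n)) (q : 'cV[R]_k)
  (c : 'cV[R]_n -> 'cV[R]_p -> R) (x : 'cV[R]_n) (th : 'cV[R]_p) :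
  0 <= inv_loss B q c x th /\
  (inv_loss B q c x th = 0 ->
     projB B *m gradx (fun y => c y th) x = 0).
Proof.
set g := gradx (fun y => c y th) x.
set S := [set r | exists lam : 'cV[R]_k, nonneg lam /\
        r = sqnorm (g + B^T *m lam) + `| dotv lam (B *m x - q) |].
have S0 : S !=set0.
  exists (sqnorm (g + B^T *m 0) + `| dotv 0 (B *m x - q) |); exists 0; split => //.
have Slb : lbound S 0.
  by move=> r [lam [_ ->]]; apply: addr_ge0; [exact: sqnorm_ge0 | exact: normr_ge0].
have Sinf : 0 <= inf S by apply: lb_le_inf.
have -> : inv_loss B q c x th = sqnorm (pospart (B *m x - q)) + inf S by [].
split; first by apply: addr_ge0 => //; exact: sqnorm_ge0.
move=> H0.
have Hi : inf S = 0.
  apply/eqP; rewrite eq_le Sinf andbT -H0 lerDr; exact: sqnorm_ge0.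
have [PB Pn] := @projB_facts R _ _ B.
apply: sqnorm_eq0; apply/eqP; rewrite eq_le sqnorm_ge0 andbT.
rewrite leNgt; apply/negP => Hpos.
have Hlt : inf S < sqnorm (projB B *m g) by rewrite Hi.
have [r [lam [_ ->]] Hr] := inf_lt S0 Hlt.
have : sqnorm (projB B *m g) <= sqnorm (g + B^T *m lam).
  have -> : projB B *m g = projB B *m (g + B^T *m lam).
    by rewrite mulmxDr mulmxA PB mul0mx addr0.
  exact: Pn.
move=> Hle; move: Hr; apply/negP; rewrite -leNgt.
apply: (le_trans Hle); rewrite lerDl; exact: normr_ge0.
Qed.
Theorem corollary1 (R : realType) (T k n p : nat)
  (B : 'I_T -> 'M[R]_(k, n)) (q : 'I_T -> 'cV[R]_k)
  (Theta : set 'cV[R]_p)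
  (c : 'I_T -> 'cV[R]_n -> 'cV[R]_p -> R)
  (x : 'I_T -> 'cV[R]_n)
  (theta : 'cV[R]_p)
  (HT : (0 < T)%N)
  (Hq : forall t, nonneg (q t))
  (Hx : forall t, nonneg (x t))
  (Hdiff : forall t th y, differentiable (fun z => c t z th) y)
  (* PL condition *)
  (HPL : exists mu : R, 0 < mu /\
     forall t th y, th \in Theta -> nonneg y ->
       (2 * mu)^-1 * sqnorm (gradx (fun z => c t z th) y)
         >= c t y th - inf [set c t z th | z in feas (B t) (q t)])
  (* KKT regularity with stationary latent parameter theta_t = theta *)
  (Htheta : theta \in Theta)
  (HKKT : forall t, exists lam : 'cV[R]_k, nonneg lam /\
     gradx (fun z => c t z theta) (x t) + (B t)^T *m lam = 0 /\
     lev (B t *m x t) (q t) /\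
     dotv lam (B t *m x t - q t) = 0)
  (* projected-gradient injectivity *)
  (Hinj : forall t, {in Theta &, injective
     (fun th => projB (B t) *m gradx (fun z => c t z th) (x t))}) :
  forall theta' : 'cV[R]_p, theta' \in Theta ->
    \sum_(t < T) inv_loss (B t) (q t) (c t) (x t) theta' = 0 ->
    theta' = theta.
Proof.
move=> th' Hth' Hsum.
pose t0 := Ordinal HT.
have H0 : inv_loss (B t0) (q t0) (c t0) (x t0) th' = 0.
  apply: (psumr_eq0P _ Hsum) => // t _.
  by have [] := @loss_facts R k n p (B t) (q t) (c t) (x t) th'.
have [_ Hl] := @loss_facts R k n p (B t0) (q t0) (c t0) (x t0) th'.
have Pg' := Hl H0.
have [PB _] := @projB_facts R _ _ (B t0).
have Pg : projB (B t0) *m gradx (fun z => c t0 z theta) (x t0) = 0.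
  have [lam [_ [Hg _]]] := HKKT t0.
  have -> : gradx (fun z => c t0 z theta) (x t0) = - ((B t0)^T *m lam).
    by apply/eqP; rewrite -subr_eq0 opprK Hg.
  by rewrite mulmxN mulmxA PB mul0mx oppr0.
apply: (Hinj t0) => //.
by rewrite /= Pg Pg'.
Qed.
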